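(* Let $P\subseteq\mathbb{R}^n$ be an $n$-dimensional rational polytope with irredundant description $P=\{x:\langle a_i,x\rangle\ge b_i,\ i=1,\dots,m\}$, and let $l$ be the common denominator of $b_1,\dots,b_m$. Then $\mathrm{int}(lP)\cap\mathbb{Z}^n=(lP)^{(1)}\cap\mathbb{Z}^n$. In particular, $\mu(P)\le l\,\mathrm{cd}(P)$.
   Context: In the irredundant description, $a_i\in(\mathbb{Z}^n)^*$ are primitive, $b_i\in\mathbb{Q}$, and each inequality defines a facet. For an $n$-dimensional rational polytope $Q$ with such a description, $d_Q(x):=\min_i(\langle a_i,x\rangle-b_i)$ and $Q^{(s)}:=\{x:d_Q(x)\ge s\}$; note $lP$ has description $\langle a_i,x\rangle\ge lb_i$. $\mu(P):=(\sup\{s>0:P^{(s)}\neq\emptyset\})^{-1}$ is the $\mathbb{Q}$-codegree, and the codegree is $\mathrm{cd}(P):=\min\{k\in\mathbb{Z}_{\ge1}:\mathrm{int}(kP)\cap\mathbb{Z}^n\neq\emptyset\}$. The common denominator of $b_1,\dots,b_m$ is the least positive integer $l$ with $lb_i\in\mathbb{Z}$ for all $i$. *)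

(* Defs.v *)
From HB Require Import structures.
From mathcomp Require Import all_boot all_order all_algebra.
From mathcomp Require Import boolp classical_sets reals topology normedtype.
Set Implicit Arguments. Unset Strict Implicit. Unset Printing Implicit Defensive.
Import Order.TTheory GRing.Theory Num.Theory.
Import numFieldNormedType.Exports.
Local Open Scope classical_set_scope.
Local Open Scope ring_scope.

Definition pairing (R : realType) (n : nat) (a : 'I_n -> int) (x : 'rV[R]_n) : R :=
  \sum_(j < n) (a j)%:~R * x ord0 j.

Definition primitive (n : nat) (a : 'I_n -> int) : Prop :=
  forall d : int, (forall j, (d %| a j)%Z) -> `|d| = 1.

Definition polyh (R : realType) (n m : nat) (a : 'I_m -> 'I_n -> int)
    (b : 'I_m -> R) : set 'rV[R]_n :=
  [set x | forall i, b i <= pairing (a i) x].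

(* Q^{(s)} = {x : d_Q(x) >= s}, with d_Q(x) = min_i (<a_i,x> - b_i);
   d_Q(x) >= s unfolds to: for all i, <a_i,x> - b_i >= s. *)
Definition shrink (R : realType) (n m : nat) (a : 'I_m -> 'I_n -> int)
    (b : 'I_m -> R) (s : R) : set 'rV[R]_n :=
  [set x | forall i, s <= pairing (a i) x - b i].

Definition Zpts (R : realType) (n : nat) : set 'rV[R]_n :=
  [set x | forall j, x ord0 j \is a Num.int].

Definition dilate (R : realType) (n : nat) (k : R) (S : set 'rV[R]_n) : set 'rV[R]_n :=
  [set k *: x | x in S].

Definition affdim_ge (R : realType) (n : nat) (S : set 'rV[R]_n) (d : nat) : Prop :=
  exists p : 'I_d.+1 -> 'rV[R]_n,
    (forall j, S (p j)) /\
    \rank (\matrix_(j < d) (p (lift ord0 j) - p ord0)) = d.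

Definition hasdim (R : realType) (n : nat) (S : set 'rV[R]_n) (d : nat) : Prop :=
  affdim_ge S d /\ ~ affdim_ge S d.+1.

Definition is_facet_ineq (R : realType) (n m : nat) (a : 'I_m -> 'I_n -> int)
    (b : 'I_m -> R) (i : 'I_m) : Prop :=
  hasdim (polyh a b `&` [set x | pairing (a i) x = b i]) n.-1.

Definition Qcodegree (R : realType) (n m : nat) (a : 'I_m -> 'I_n -> int)
    (b : 'I_m -> R) : R :=
  (sup [set s : R | 0 < s /\ shrink a b s !=set0])^-1.

Definition cd_pred (R : realType) (n : nat) (P : set 'rV[R]_n) (k : nat) : bool :=
  `[< (0 < k)%N /\ (interior (dilate k%:R P) `&` @Zpts R n) !=set0 >].

Definition codegree (R : realType) (n : nat) (P : set 'rV[R]_n) : nat :=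
  match pselect (exists k, cd_pred P k) with
  | left h => ex_minn h
  | right _ => 0%N
  end.

Definition common_den (m : nat) (b : 'I_m -> rat) (l : nat) : Prop :=
  [/\ (0 < l)%N, (forall i, l%:R * b i \is a Num.int) &
      forall k : nat, (0 < k)%N -> (forall i, k%:R * b i \is a Num.int) -> (l <= k)%N].

(* Main.v *)
Require Import Defs.
From HB Require Import structures.
From mathcomp Require Import all_boot all_order all_algebra.
From mathcomp Require Import boolp classical_sets reals topology normedtype.
From mathcomp Require Import ring lra zify.
Import Order.TTheory GRing.Theory Num.Theory.
Import numFieldNormedType.Exports.
Local Open Scope classical_set_scope.
Local Open Scope ring_scope.

Set Implicit Arguments.
Section S.
Variable R : realType.

Lemma interiorP n (x : 'rV[R]_n) (A : set 'rV[R]_n) :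
  interior A x <-> exists2 e : R, 0 < e & forall y : 'rV[R]_n, (forall j, `|x ord0 j - y ord0 j| < e) -> A y.
Proof.
rewrite /interior /= nbhs_ballP; split.
- move=> [e e0 H]; exists e => // y Hy; apply: H; split => // i j.
  by rewrite (ord1 i); exact: Hy.
- move=> [e e0 H]; exists e => // y [_ Hy]; apply: H => j; exact: Hy.
Qed.

Lemma pairingD n (a : 'I_n -> int) (x y : 'rV[R]_n) :
  pairing a (x + y) = pairing a x + pairing a y.
Proof. by rewrite /pairing -big_split; apply: eq_bigr => j _; rewrite mxE mulrDr. Qed.

Lemma pairingZ n (a : 'I_n -> int) (t : R) (x : 'rV[R]_n) :
  pairing a (t *: x) = t * pairing a x.
Proof. by rewrite /pairing mulr_sumr; apply: eq_bigr => j _; rewrite mxE mulrCA. Qed.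

Lemma pairingN n (a : 'I_n -> int) (x : 'rV[R]_n) :
  pairing a (- x) = - pairing a x.
Proof. by rewrite -scaleN1r pairingZ mulN1r. Qed.

Lemma pairing_delta n (a : 'I_n -> int) (j0 : 'I_n) :
  pairing a (delta_mx ord0 j0 : 'rV[R]_n) = (a j0)%:~R.
Proof.
rewrite /pairing (bigD1 j0) //= mxE !eqxx mulr1 big1 ?addr0 // => j hj.
by rewrite mxE (negbTE hj) andbF mulr0.
Qed.

Lemma pairing_int n (a : 'I_n -> int) (x : 'rV[R]_n) :
  Zpts x -> pairing a x \is a Num.int.
Proof.
move=> hx; rewrite /pairing; apply: rpred_sum => j _.
by apply: rpredM => //; exact: intr_int.
Qed.

Lemma pairing_lb n (a : 'I_n -> int) (z : 'rV[R]_n) :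
  (forall j, `|z ord0 j| <= 1) -> - \sum_j `|(a j)%:~R : R| <= pairing a z.
Proof.
move=> hz; rewrite -sumrN /pairing; apply: ler_sum => j _.
rewrite lerNl; apply: le_trans (ler_norm _) _; rewrite normrN normrM.
by rewrite -[X in _ <= X]mulr1 ler_wpM2l.
Qed.

Lemma dilate_polyh n m (a : 'I_m -> 'I_n -> int) (c : 'I_m -> R) (k : R) :
  0 < k -> dilate k (polyh a c) = polyh a (fun i => k * c i).
Proof.
move=> k0; apply/seteqP; split.
- move=> _ [x hx <-] i; rewrite pairingZ ler_pM2l //; exact: hx.
- move=> y hy; exists (k^-1 *: y); last by rewrite scalerA mulfV ?gt_eqF // scale1r.
  move=> i; rewrite pairingZ -(ler_pM2l k0) mulrA mulfV ?gt_eqF // mul1r; exact: hy.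
Qed.

Lemma interior_strict n m (a : 'I_m -> 'I_n -> int) (c : 'I_m -> R) x :
  (forall i, exists j, a i j != 0) ->
  interior (polyh a c) x -> forall i, c i < pairing (a i) x.
Proof.
move=> ha /interiorP [e e0 H] i.
have hx : polyh a c x by apply: H => j; rewrite subrr normr0.
rewrite lt_neqAle hx andbT; apply/eqP => eq1.
have [j hj] := ha i.
set t := (e / 2) / (a i j)%:~R.
have hz := H (x - t *: delta_mx ord0 j).
have ge1 : 1 <= `|(a i j)%:~R : R| by apply: norm_intr_ge1; rewrite ?intr_int ?intr_eq0.
have tle : `|t| <= e / 2.
  have e2 : 0 <= e / 2 by rewrite divr_ge0 // ltW.
  rewrite /t normrM normfV (@ger0_norm _ (e/2)) //.
  apply: ler_piMr => //.
  by rewrite invf_le1 // (lt_le_trans ltr01).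
have hzz : polyh a c (x - t *: delta_mx ord0 j).
  apply: H => j'; rewrite !mxE opprB addrC subrK normrM.
  apply: le_lt_trans (_ : `|t| * 1 < e).
    by rewrite ler_wpM2l //; case: (_ && _); rewrite /= ?normr1 ?normr0.
  rewrite mulr1; apply: le_lt_trans tle _; rewrite ltr_pdivrMr // ltr_pMr //.
  by rewrite ltr1n.
have := hzz i.
rewrite pairingD pairingN pairingZ pairing_delta /t mulfVK ?intr_eq0 // -eq1.
have e2 : 0 < e / 2 by rewrite divr_gt0.
lra.
Qed.

Lemma strict_interior n m (a : 'I_m -> 'I_n -> int) (c : 'I_m -> R) x :
  (forall i, c i < pairing (a i) x) -> interior (polyh a c) x.
Proof.
move=> hs.
suff : \forall y \near x, forall i, c i <= pairing (a i) y by [].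
apply: (@filter_forall _ _ (fun i y => c i <= pairing (a i) y) (nbhs x) _) => i.
apply/interiorP.
set S := \sum_j `|(a i j)%:~R : R|.
have S0 : 0 <= S by apply: sumr_ge0 => j _.
exists ((pairing (a i) x - c i) / (1 + S)).
  by rewrite divr_gt0 ?subr_gt0 ?hs // ltr_wpDr.
move=> y hy.
have : pairing (a i) (x - y) <= S * ((pairing (a i) x - c i) / (1 + S)).
  rewrite /pairing /S mulr_suml; apply: ler_sum => j _.
  apply: le_trans (ler_norm _) _; rewrite normrM; apply: ler_wpM2l => //.
  by rewrite !mxE; apply: ltW; apply: hy.
rewrite pairingD pairingN => h.
have : S * ((pairing (a i) x - c i) / (1 + S)) <= pairing (a i) x - c i.
  set D := pairing (a i) x - c i.
  have hD : 0 < D by rewrite subr_gt0 hs.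
  have S1 : 0 < 1 + S by rewrite ltr_wpDr.
  have hq : 0 < D / (1 + S) by rewrite divr_gt0.
  have eD : D = (D / (1 + S)) * (1 + S) by rewrite divfK // gt_eqF.
  rewrite [X in _ <= X]eD mulrDr mulr1 mulrC lerDr; exact: ltW.
move=> h2; have := le_trans h h2; lra.
Qed.
End S.

Unset Implicit Arguments.
Lemma int_gt0_ge1 (R : realType) (u : R) : u \is a Num.int -> 0 < u -> 1 <= u.
Proof.
move=> /intrP [z ->]; rewrite ltr0z ler1z; lia.
Qed.

Lemma ratr_int_num (R : realType) (q : rat) : q \is a Num.int -> (ratr q : R) \is a Num.int.
Proof. by move=> /intrP [z ->]; rewrite ratr_int intr_int. Qed.

Lemma prim_nz n (a : 'I_n -> int) : primitive a -> exists j, a j != 0.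
Proof.
move=> hp; case: (boolP [exists j, a j != 0]) => [/existsP//|/existsPn h].
have := hp 2%:Z; rewrite /= => /(_ _) H; exfalso.
suff : `|(2:int)| = 1 by [].
apply: H => j; have := h j; rewrite negbK => /eqP ->; exact: dvdz0.
Qed.

Theorem lemma1p8 (R : realType) (n m : nat) (a : 'I_m -> 'I_n -> int)
    (b : 'I_m -> rat) (l : nat) :
  let bR := fun i => ratr (b i) : R in
  let P := polyh a bR in
  (forall i, primitive (a i)) ->
  bounded_set P ->
  hasdim P n ->
  (forall i, is_facet_ineq a bR i) ->
  common_den b l ->
  (interior (dilate l%:R P) `&` @Zpts R n =
     shrink a (fun i => l%:R * bR i) 1 `&` @Zpts R n)
  /\ Qcodegree a bR <= (l * codegree P)%:R.
Proof.
move=> bR P hprim _ _ _ [l0 lint _].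
have ha : forall i, exists j, a i j != 0 := fun i => @prim_nz _ (a i) (hprim i).
have lR : 0 < l%:R :> R by rewrite ltr0n.
have hlb : forall i, l%:R * bR i \is a Num.int.
  move=> i; rewrite /bR.
  have -> : l%:R * ratr (b i) = ratr (l%:R * b i) :> R by rewrite rmorphM rmorph_nat.
  exact: ratr_int_num.
split.
  rewrite /P dilate_polyh //; apply/seteqP; split => x [hx hz]; split => //.
    move=> i; have h := interior_strict ha hx i.
    apply: int_gt0_ge1; last by rewrite subr_gt0.
    by apply: rpredB => //; exact: pairing_int.
  apply: strict_interior => i; have := hx i; lra.
rewrite /Qcodegree /codegree.
set S := [set s : R | 0 < s /\ shrink a bR s !=set0].
case: pselect => [h|hn].
  case: ex_minnP => k /asboolP [k0 [x [hx hz]]] _.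
  rewrite /P dilate_polyh ?ltr0n // in hx.
  have hs := interior_strict ha hx.
  have kR : 0 < k%:R :> R by rewrite ltr0n.
  have hS : S ((l * k)%:R^-1).
    split; first by rewrite invr_gt0 ltr0n muln_gt0 l0.
    exists (k%:R^-1 *: x) => i; rewrite pairingZ.
    have h1 : 1 <= l%:R * pairing (a i) x - k%:R * (l%:R * bR i).
      apply: int_gt0_ge1.
        apply: rpredB; apply: rpredM; rewrite ?natr_int ?hlb //; exact: pairing_int.
      by rewrite subr_gt0 mulrCA ltr_pM2l.
    rewrite natrM -(ler_pM2l (mulr_gt0 lR kR)) mulfV ?gt_eqF ?mulr_gt0 //.
    have -> : l%:R * k%:R * (k%:R^-1 * pairing (a i) x - bR i) =
      l%:R * pairing (a i) x - k%:R * (l%:R * bR i).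
      by field; rewrite gt_eqF.
    exact: h1.
  case: (pselect (has_sup S)) => [hsup|hnsup]; last by rewrite sup_out // invr0 ler0n.
  have hle : (l * k)%:R^-1 <= sup S by apply: sup_upper_bound.
  have spos : 0 < sup S by apply: lt_le_trans hle; rewrite invr_gt0 ltr0n muln_gt0 l0.
  rewrite -[X in _ <= X]invrK lef_pV2 // posrE ?invr_gt0 ?ltr0n ?muln_gt0 ?l0 //.
have S0 : S = set0.
  apply/seteqP; split => // s [s0 [y hy]]; exfalso; apply: hn.
  set M := \sum_i \sum_j `|(a i j)%:~R : R|.
  set K := (Num.trunc (M / s)).+1.
  have hK : M < K%:R * s by rewrite -ltr_pdivrMr //; exact: truncnS_gt.
  have KR : 0 < K%:R :> R by rewrite ltr0n.
  exists K; apply/asboolP; split => //.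
  exists (\row_j ((Num.floor (K%:R * y ord0 j))%:~R)); split; last first.
    by move=> j; rewrite mxE intr_int.
  rewrite /P dilate_polyh //; apply: strict_interior => i.
  set x := \row_j _.
  have hd : forall j, `|(x - K%:R *: y) ord0 j| <= 1.
    move=> j; rewrite !mxE; set v := K%:R * y ord0 j.
    have h1 := real_floor_le (num_real v).
    have h2 := real_floorD1_gt (num_real v).
    rewrite intrD in h2; rewrite ler_norml; apply/andP; split; lra.
  have := @pairing_lb R _ (a i) _ hd; rewrite pairingD pairingN pairingZ.
  have hM : \sum_j `|(a i j)%:~R : R| <= M.
    rewrite /M (bigD1 i) //=; apply: ler_wpDr => //.
    by apply: sumr_ge0 => i' _; apply: sumr_ge0.
  have := hy i => hyi.
  have : K%:R * s <= K%:R * (pairing (a i) y - bR i) by rewrite ler_pM2l.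
  rewrite mulrBr; lra.
by rewrite S0 sup0 invr0 muln0.
Qed.
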